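(* Let $V$ be a finite totally ordered set and let $w$ be a derangement of $V$ (a fixed-point-free permutation of $V$). Then: (a) For distinct $t, t' \in U(w)$, the sets $E_{w,t}$ and $E_{w,t'}$ are disjoint. (b) If $s \in V$ is minimal (with respect to the order on $V$) in its $w$-cycle, then $E_{w,w(s)} \subseteq E_{w,s}$.
   Context: For a permutation $w$ of a finite totally ordered set $V$ and $t \in V$, define $\rho_w(t) = \{t, w(t), \ldots, w^{k-1}(t)\}$, where $k$ is the smallest positive integer with $w^k(t) \le t$, and define $\lambda_w(t) = w^{-\ell}(t)$, where $\ell$ is the smallest positive integer with $w^{-\ell}(t) \le t$. Define $E_{w,t} = \{\{\lambda_w(t), s\} : s \in \rho_w(t)\}$ (a set of 2-element subsets of $V$, i.e. potential edges of a graph on $V$). Let $U(w)$ denote the set of elements of $V$ that are not the minimal element of their $w$-cycle. *)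

(* Defs.v *)
From mathcomp Require Import all_boot all_order all_fingroup.
Set Implicit Arguments. Unset Strict Implicit. Unset Printing Implicit Defensive.
Import Order.TTheory.
Local Open Scope order_scope.

Section Defs.
Context {d : Order.disp_t} {T : finOrderType d}.

Lemma first_return_ex (f : {perm T}) (t : T) :
  exists n, (0 < n)%N && ((f ^+ n)%g t <= t).
Proof. by exists #[f]%g; rewrite order_gt0 expg_order perm1 lexx. Qed.

Definition first_return (f : {perm T}) (t : T) : nat := ex_minn (first_return_ex f t).

Definition rho (w : {perm T}) (t : T) : {set T} :=
  [set (w ^+ i)%g t | i : 'I_(first_return w t)].

Definition lam (w : {perm T}) (t : T) : T :=
  ((w^-1) ^+ first_return (w^-1)%g t)%g t.

Definition Eset (w : {perm T}) (t : T) : {set {set T}} :=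
  [set [set lam w t; s] | s in rho w t].

Definition Uset (w : {perm T}) : {set T} :=
  [set t | ~~ [forall x in porbit w t, t <= x]].

End Defs.

(* Main.v *)
Require Import Defs.
From mathcomp Require Import all_boot all_order all_fingroup.
Import Order.TTheory.
Local Open Scope order_scope.

Section Aux.
Context {d : Order.disp_t} {T : finOrderType d}.
Implicit Types (f w : {perm T}) (t : T).
Local Open Scope group_scope.
Local Open Scope order_scope.

Lemma fr_spec f t : let k := first_return f t in
  [/\ (0 < k)%N, iter k f t <= t & forall j, (0 < j < k)%N -> t < iter j f t].
Proof.
rewrite /first_return; case: ex_minnP => k /andP[k0 hk] hmin.
split => //; first by rewrite -permX.
move=> j /andP[j0 jk]; rewrite ltNge -permX; apply/negP => hj.
by have := hmin j; rewrite j0 hj => /(_ isT); rewrite leqNgt jk.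
Qed.

Lemma iterVK w n x : iter n w^-1 (iter n w x) = x.
Proof. by elim: n x => // n IH x; rewrite iterSr iterS permK IH. Qed.

Lemma iterKV w n x : iter n w (iter n w^-1 x) = x.
Proof. by elim: n x => // n IH x; rewrite iterSr iterS permKV IH. Qed.

Lemma lam_lt w t : t \in Uset w -> lam w t < t.
Proof.
rewrite inE => /forall_inPn [x hx]; rewrite -ltNge => xt.
rewrite /lam; case: (fr_spec w^-1 t) => l0 hl hj.
rewrite permX lt_neqAle hl andbT; apply/negP => /eqP hfix.
rewrite -porbitV in hx; case/porbitP: hx => n; rewrite permX => hx.
have hq : forall q, iter (q * first_return w^-1 t) w^-1 t = t.
  by elim=> // q IH; rewrite mulSn iterD IH hfix.
rewrite (divn_eq n (first_return w^-1 t)) addnC iterD hq in hx.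
have hr := ltn_pmod n l0; move: hr xt; rewrite hx.
case: (posnP (n %% first_return w^-1 t)) => [->|p0] hr; first by rewrite ltxx.
have := hj _ (introT andP (conj p0 hr)) => h1 h2.
by have := lt_trans h1 h2; rewrite ltxx.
Qed.

Lemma rho_path w t s : s \in rho w t ->
  exists i N, [/\ (i < N)%N, (forall j, (j < N)%N -> t <= iter j w^-1 s),
     iter i w^-1 s = t & iter N w^-1 s = lam w t].
Proof.
case/imsetP => i _ ->; rewrite permX.
case: (fr_spec w t) => k0 hk hj; case: (fr_spec w^-1 t) => l0 hl hj'.
exists i, (i + first_return w^-1 t); split.
- by rewrite -{1}(addn0 i) ltn_add2l.
- move=> j hjN; case: (leqP j i) => ji.
    rewrite -(subnK ji) addnC iterD iterVK.
    case: (posnP (i - j)) => [->|p]; first by [].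
    apply/ltW/hj; rewrite p /=; apply: leq_ltn_trans (leq_subr _ _) _; exact: ltn_ord.
  rewrite -(subnK (ltnW ji)) iterD iterVK.
  case: (posnP (j - i)) => [->|p]; first by [].
  by apply/ltW/hj'; rewrite p /= ltn_subLR // ltnW.
- by rewrite iterVK.
- by rewrite addnC iterD iterVK /lam permX.
Qed.

End Aux.

Theorem lemma3p4 (d : Order.disp_t) (T : finOrderType d) (w : {perm T})
    (hder : forall x : T, w x != x) :
  (forall t t' : T, t \in Uset w -> t' \in Uset w -> t != t' ->
     [disjoint Eset w t & Eset w t'])
  /\
  (forall s : T, (forall x, x \in porbit w s -> s <= x) ->
     Eset w (w s) \subset Eset w s).
Proof.
split.
  move=> t t' tU t'U tt'; rewrite disjoint_subset; apply/subsetP => X hX.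
  rewrite !inE; apply/negP => hX'.
  case/imsetP: hX => s hs ->{X} in hX'; case/imsetP: hX' => s' hs' heq.
  have mt := @lam_lt _ _ w t tU; have mt' := @lam_lt _ _ w t' t'U.
  have [i [N [iN hN hi hNe]]] := @rho_path _ _ w t s hs.
  have [i' [N' [iN' hN' hi' hNe']]] := @rho_path _ _ w t' s' hs'.
  have ts : t <= s by exact: (hN 0%N (leq_ltn_trans (leq0n _) iN)).
  have ts' : t' <= s' by exact: (hN' 0%N (leq_ltn_trans (leq0n _) iN')).
  have hm : lam w t = lam w t'.
    have : lam w t \in [set lam w t'; s'] by rewrite -heq set21.
    case/set2P => // e1.
    have : lam w t' \in [set lam w t; s] by rewrite heq set21.
    case/set2P => e2; first by rewrite e2.
    have := lt_le_trans mt' ts'; rewrite -e1 e2 => h1.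
    by have := lt_trans (lt_le_trans mt ts) h1; rewrite ltxx.
  have hss : s = s'.
    have : s \in [set lam w t'; s'] by rewrite -heq set22.
    case/set2P => // e1; move: ts; rewrite e1 -hm => /(lt_le_trans mt).
    by rewrite ltxx.
  subst s'.
  have eN : N = N'.
    case: (ltngtP N N') => // h.
      by have := hN' _ h; rewrite hNe hm => /(lt_le_trans mt'); rewrite ltxx.
    by have := hN _ h; rewrite hNe' -hm => /(lt_le_trans mt); rewrite ltxx.
  subst N'.
  have h1 := hN _ iN'; rewrite hi' in h1.
  have h2 := hN' _ iN; rewrite hi in h2.
  by move: tt'; rewrite (@le_anti _ _ t t') ?h1 ?h2 ?eqxx.
move=> s smin.
have inorb : forall n, iter n w s \in porbit w s by move=> n; rewrite -permX mem_porbit.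
have inorbV : forall n, iter n w^-1%g s \in porbit w s.
  by move=> n; rewrite -porbitV -permX mem_porbit.
have lams : lam w s = s.
  rewrite /lam permX; case: (fr_spec w^-1 s) => _ hl _.
  by apply/le_anti; rewrite hl smin.
have lamws : lam w (w s) = s.
  have sws : s <= w s by have := smin _ (inorb 1%N).
  rewrite /lam; have -> : first_return w^-1%g (w s) = 1%N.
    rewrite /first_return; case: ex_minnP => k /andP[k0 _] hmin.
    apply/eqP; rewrite eqn_leq k0 andbT; apply: hmin.
    by rewrite /= expg1 permK sws.
  by rewrite expg1 permK.
have hk : iter (first_return w s) w s = s.
  by case: (fr_spec w s) => _ hl _; apply/le_anti; rewrite hl smin.
apply/subsetP => X /imsetP [y /imsetP [i _ ->] ->].
rewrite lamws; apply/imsetP; exists (iter i.+1 w s); last first.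
  by rewrite lams permX iterSr.
case: (fr_spec w s) => k0 _ _.
apply/imsetP; exists (Ordinal (ltn_pmod i.+1 k0)) => //=.
rewrite permX -iterS {1}(divn_eq i.+1 (first_return w s)) addnC iterD.
have hq : forall q, iter (q * first_return w s) w s = s.
  by elim=> // q IH; rewrite mulSn iterD IH hk.
by rewrite hq.
Qed.
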